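(* Let $n\geqslant1$, $N\in\mathbb{N}$, $\gamma\in\mathbb{R}\setminus\{0\}$, let $a_0,\ldots,a_n$ be holomorphic near $t=0$ with $a_n\equiv1$, and let $M(x,t,u_0,\ldots,u_n)=t^{-\mu}\widetilde M(x,t,u_0,\ldots,u_n)$, where $\mu\geqslant0$ is an integer and $\widetilde M$ is holomorphic near $0\in\mathbb{C}^{n+3}$ ($\mu$ is the pole order of $M$ at $t=0$). Assume that for every integer $k\geqslant1$ the polynomial $P_k(\lambda)=\sum_{j=0}^n a_j(0)(k+N+{\rm i}\gamma\lambda)^j$ has no integer roots. Let $\psi=\sum_{k=1}^\infty c_k(x^{{\rm i}\gamma})x^k$, with $c_k$ meromorphic at $t=0$, be a formal solution of $$\sum_{j=0}^n a_j(x^{{\rm i}\gamma})(\delta+N)^j u=x\,M(x,x^{{\rm i}\gamma},u,\delta u,\ldots,\delta^n u),\qquad\delta=x\frac{d}{dx}.$$ Then for every $k\geqslant1$, the pole order $\nu_k$ of $c_k(t)$ at $t=0$ satisfies $\nu_k\leqslant k\mu$.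
   Context: $x^{{\rm i}\gamma}=e^{{\rm i}\gamma\ln x}$. On exotic series $\delta$ acts termwise by $\delta\bigl(p(x^{{\rm i}\gamma})x^k\bigr)=\bigl((k+{\rm i}\gamma\,t\tfrac{d}{dt})p\bigr)(x^{{\rm i}\gamma})x^k$; substitution into $M$ is formal. The pole order of $c_k$ is the integer $\nu_k$ with $c_k(t)=t^{-\nu_k}\cdot(\text{holomorphic function nonvanishing at }0)$ (negative if $c_k$ vanishes at $0$). *)

(* Defs.v *)
From HB Require Import structures.
From mathcomp Require Import all_boot all_order all_algebra.
From mathcomp Require Import boolp classical_sets fsbigop reals.
From mathcomp Require Import complex.
Set Implicit Arguments. Unset Strict Implicit. Unset Printing Implicit Defensive.
Import Order.TTheory GRing.Theory Num.Theory.
Local Open Scope ring_scope.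
Local Open Scope complex_scope.

(* Exotic series  sum_{k,m} f k m  t^m x^k  with t = x^{i gamma} treated   *)
(* formally; f : nat -> int -> C  (x-exponent k, t-exponent m).           *)
Definition exo (R : realType) := nat -> int -> R[i].

Section Exotic.
Variable R : realType.
Local Notation C := R[i].

(* sum over all of a type for a finitely supported summand (fsbigop);    *)
(* all uses below are finitely supported under the standing hypotheses.  *)
Definition fsumZ (F : int -> C) : C := \sum_(m \in [set: int]) F m.
Definition fsumN (F : nat -> C) : C := \sum_(m \in [set: nat]) F m.

(* holomorphic near 0: power series with positive radius of convergence *)
Definition holo1 (a : nat -> C) : Prop :=
  exists r : C, 0 < r /\ exists B : C, forall p, `|a p| * r ^+ p <= B.

(* meromorphic at 0: Laurent series, finitely many negative powers,
   positive radius of convergence *)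
Definition mero1 (c : int -> C) : Prop :=
  (exists L : int, forall m, m < L -> c m = 0) /\
  exists r : C, 0 < r /\ exists B : C, forall p : nat, `|c p%:Z| * r ^+ p <= B.

Definition pole_order (c : int -> C) (nu : int) : Prop :=
  c (- nu) != 0 /\ forall m, m < - nu -> c m = 0.

(* holomorphic near 0 in C^{n+3}: power series in (x, t, u_0..u_n)
   with coefficients Mt ax at au, convergent on some polydisc *)
Definition holoM (n : nat) (Mt : nat -> nat -> {ffun 'I_n.+1 -> nat} -> C) :=
  exists r : C, 0 < r /\ exists B : C, forall ax tx au,
    `|Mt ax tx au| * r ^+ (ax + tx + \sum_(j < n.+1) au j)%N <= B.

(* delta = x d/dx acting on exotic series, t = x^{i gamma} *)
Definition delta (gamma : R) (f : exo R) : exo R :=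
  fun k m => (k%:R + 'i * gamma%:C * m%:~R) * f k m.

Definition deltaN (gamma : R) (N : nat) (f : exo R) : exo R :=
  fun k m => delta gamma f k m + N%:R * f k m.

Definition tmul (a : nat -> C) (f : exo R) : exo R :=
  fun k m => fsumN (fun q => a q * f k (m - q%:Z)).

Definition emul (f g : exo R) : exo R :=
  fun k m => \sum_(i < k.+1) fsumZ (fun m1 => f i m1 * g (k - i)%N (m - m1)).

Definition eone : exo R := fun k m => if (k == 0%N) && (m == 0) then 1 else 0.

Definition epow (f : exo R) (e : nat) : exo R := iter e (emul f) eone.

Definition psi_of (c : nat -> int -> C) : exo R :=
  fun k m => if k == 0%N then 0 else c k m.

Definition lhs (n N : nat) (gamma : R) (a : nat -> nat -> C) (u : exo R) : exo R :=
  fun k m => \sum_(j < n.+1) tmul (a j) (iter j (deltaN gamma N) u) k m.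

(* formal composition  Mt(x, t, u, delta u, ..., delta^n u) *)
Definition Mcomp (n : nat) (gamma : R) (Mt : nat -> nat -> {ffun 'I_n.+1 -> nat} -> C)
  (u : exo R) : exo R :=
  fun k m => \sum_(ax < k.+1)
     \sum_(au \in [set: {ffun 'I_n.+1 -> nat}])
       fsumN (fun tx => Mt ax tx au *
         (\big[emul/eone]_(j < n.+1) epow (iter j (delta gamma) u) (au j))
           (k - ax)%N (m - tx%:Z)).

(* right-hand side  x * t^{-mu} * Mt(...) *)
Definition rhs (n : nat) (gamma : R) (mu : nat)
  (Mt : nat -> nat -> {ffun 'I_n.+1 -> nat} -> C) (u : exo R) : exo R :=
  fun k m => if k is K.+1 then Mcomp gamma Mt u K (m + mu%:Z) else 0.

Definition Pk (n N : nat) (gamma : R) (a : nat -> nat -> C) (k : nat) : {poly C} :=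
  \sum_(j < n.+1) a j 0%N *: (((k + N)%:R)%:P + ('i * gamma%:C) *: 'X) ^+ j.

End Exotic.

(* Main.v *)
Require Import Defs.
From HB Require Import structures.
From mathcomp Require Import all_boot all_order all_algebra.
From mathcomp Require Import boolp classical_sets fsbigop reals.
From mathcomp Require Import complex.
From mathcomp Require Import zify ring.
Import Order.TTheory GRing.Theory Num.Theory.
Local Open Scope ring_scope.
Local Open Scope complex_scope.

Section Aux.
Variable R : realType.
Variable mu : nat.

Definition Supp (K : nat) (f : exo R) :=
  forall k (m : int), (k <= K)%N -> m < - (k * mu)%N%:Z -> f k m = 0.

Lemma fsumN_one (F : nat -> R[i]) : (forall q, q != 0%N -> F q = 0) -> fsumN F = F 0%N.
Proof.
move=> HF; rewrite /fsumN -(fsbig_widen [set 0%N]) //; first by rewrite fsbig_set1.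
move=> q [_ /= Hq]; apply: HF; apply/eqP => E; exact: Hq E.
Qed.

Lemma Supp_eone K : Supp K (eone R).
Proof.
move=> k m _ hm; rewrite /eone; case: k hm => [|k] hm //=.
case: eqP => // E; move: hm; rewrite E mul0n; lia.
Qed.

Lemma Supp_delta K g f : Supp K f -> Supp K (delta g f).
Proof. by move=> H k m hk hm; rewrite /delta H // mulr0. Qed.

Lemma Supp_iter_delta K g f j : Supp K f -> Supp K (iter j (delta g) f).
Proof. by move=> H; elim: j => //= j IH; apply: Supp_delta. Qed.

Lemma Supp_emul K f g : Supp K f -> Supp K g -> Supp K (emul f g).
Proof.
move=> Hf Hg k m hk hm; rewrite /emul big1 // => i _.
rewrite /fsumZ fsbig1 // => m1 _.
have hi : (i <= k)%N by rewrite -ltnS.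
have [h1|h1] := ltP m1 (- (i * mu)%N%:Z).
  by rewrite Hf ?mul0r //; apply: leq_trans hk.
rewrite Hg ?mulr0 //; first by apply: leq_trans (leq_subr _ _) hk.
have hle : (i * mu <= k * mu)%N by rewrite leq_mul2r hi orbT.
rewrite mulnBl; move: hm h1 hle; lia.
Qed.

Lemma Supp_epow K f e : Supp K f -> Supp K (epow f e).
Proof.
move=> H; elim: e => [|e IH] /=; first exact: Supp_eone.
exact: Supp_emul.
Qed.


Lemma Supp_bigprod K n g u (au : {ffun 'I_n.+1 -> nat}) : Supp K u ->
  Supp K (\big[@emul R/eone R]_(j < n.+1) epow (iter j (delta g) u) (au j)).
Proof.
move=> H; apply: (big_ind (Supp K)); first exact: Supp_eone.
  exact: Supp_emul.
move=> j _; apply: Supp_epow; exact: Supp_iter_delta.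
Qed.

Lemma iter_deltaN g N j (f : exo R) k m :
  iter j (deltaN g N) f k m =
  ((k%:R + 'i * g%:C * m%:~R) + N%:R) ^+ j * f k m.
Proof.
elim: j => [|j IH] /=; first by rewrite expr0 mul1r.
by rewrite /deltaN /delta IH exprS; ring.
Qed.

End Aux.

Theorem lemma3 (R : realType) (n N : nat) (gamma : R) (mu : nat)
  (a : nat -> nat -> R[i])
  (Mt : nat -> nat -> {ffun 'I_n.+1 -> nat} -> R[i])
  (c : nat -> int -> R[i]) :
  (1 <= n)%N ->
  gamma != 0 ->
  (forall j, (j <= n)%N -> holo1 (a j)) ->
  (forall p, a n p = (p == 0%N)%:R) ->
  holoM Mt ->
  ((0 < mu)%N -> exists ax au, Mt ax 0%N au != 0) ->
  (forall k, (1 <= k)%N -> forall z : int, ~~ root (Pk n N gamma a k) z%:~R) ->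
  (forall k, (1 <= k)%N -> mero1 (c k)) ->
  (forall k m, lhs n N gamma a (psi_of c) k m = rhs gamma mu Mt (psi_of c) k m) ->
  forall k, (1 <= k)%N -> forall nu : int, pole_order (c k) nu -> nu <= (k * mu)%:Z.
Proof.
move=> _ _ _ _ _ _ Hroot Hmero Heq.
have claim : forall i, (1 <= i)%N -> forall m : int, m < - (i * mu)%N%:Z -> c i m = 0.
  elim/ltn_ind => i IH hi.
  have Hpsi : @Supp R mu i.-1 (psi_of c).
    move=> k m hk hm; rewrite /psi_of; case: eqP => // /eqP k0.
    apply: IH => //; first lia.
    by rewrite lt0n.
  have key : forall m : int, m < - (i * mu)%N%:Z ->
      (forall m', m' < m -> c i m' = 0) -> c i m = 0.
    move=> m hm Hbelow; apply/eqP; apply: contraT => Hne.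
    have Hl : lhs n N gamma a (psi_of c) i m = (Pk n N gamma a i).[m%:~R] * c i m.
      rewrite /lhs /Pk horner_sum mulr_suml; apply: eq_bigr => j _.
      rewrite /tmul fsumN_one.
        rewrite iter_deltaN subr0 /psi_of ifF; last by apply/eqP; lia.
        rewrite hornerZ horner_exp hornerD hornerC hornerZ hornerX natrD.
        by rewrite mulrA -[_ + N%:R + _]addrA [N%:R + _]addrC addrA.
      move=> q hq; rewrite iter_deltaN /psi_of ifF; last by apply/eqP; lia.
      rewrite Hbelow ?mulr0 //; move/eqP: hq; lia.
    have Hr : rhs gamma mu Mt (psi_of c) i m = 0.
      rewrite /rhs; case E: i => [|K]; first by move: hi; rewrite E.
      rewrite /Mcomp big1 // => ax _; rewrite fsbig1 // => au _.
      rewrite /fsumN fsbig1 // => tx _.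
      rewrite (@Supp_bigprod R mu K) ?mulr0 //.
      - by move: Hpsi; rewrite E.
      - exact: leq_subr.
      have hle : (ax <= K)%N by rewrite -ltnS.
      have hle2 : ((K - ax) * mu <= K * mu)%N by rewrite leq_mul2r leq_subr orbT.
      move: hm hle2; rewrite E mulSn; lia.
    have := Heq i m; rewrite Hl Hr => /eqP; rewrite mulf_eq0 (negbTE Hne) orbF.
    by move=> H; move: (Hroot i hi m); rewrite /root H.
  have [L HL] := (Hmero i hi).1.
  suff H : forall d : nat, forall m : int, m < L + d%:Z -> m < - (i * mu)%N%:Z -> c i m = 0.
    move=> m hm; apply: (H `|m - L|.+1%N) => //; have := lez_abs (m - L); lia.
  elim => [|d IHd] m h1 h2; first by apply: HL; lia.
  have [h3|h3] := ltP m (L + d%:Z); first exact: IHd.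
  apply: key => // m' hm'; apply: IHd; lia.
move=> k hk nu [Hnz _].
have [//|h] := leP nu (k * mu)%N%:Z.
by move: Hnz; rewrite claim ?eqxx //; lia.
Qed.
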